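(* Let $M$ be a smooth $n$-manifold with a torsion-free linear connection $\nabla$ and a symmetric $(0,2)$-tensor field $c$, let $\overline g_{\nabla,c}$ be the modified Riemannian extension on $T^{\ast}M$, and let $\widetilde{\nabla}$ be the linear connection on $T^{\ast}M$ given in the adapted frame by $\widetilde{\nabla}_{E_{\overline{i}}}E_{\overline{j}}=0$, $\widetilde{\nabla}_{E_{\overline{i}}}E_{j}=0$, $\widetilde{\nabla}_{E_{i}}E_{\overline{j}}=-\Gamma^{j}_{ih}E_{\overline{h}}$, $\widetilde{\nabla}_{E_{i}}E_{j}=\Gamma^{h}_{ij}E_{h}+\tfrac12(\nabla_i c_{jh}+\nabla_j c_{ih}-\nabla_h c_{ij})E_{\overline{h}}$. Then the scalar curvature $\widetilde r=\widetilde R_{\alpha\beta}(\overline g_{\nabla,c})^{\alpha\beta}$ of $\widetilde\nabla$ with respect to $\overline g_{\nabla,c}$ vanishes identically.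
   Context: Summation convention; $\overline{i}=n+i$; Greek indices run over the full adapted frame $\{E_j,E_{\overline j}\}$. $\Gamma^h_{ij}$ are the coefficients of $\nabla$ in local coordinates $(x^i)$; $\nabla_ic_{jk}$ the components of $\nabla c$. On $T^{\ast}M$ use induced coordinates $(x^i,p_i)$, $\partial_{\overline i}=\partial/\partial p_i$, and the adapted frame $E_j=\partial_j+p_a\Gamma^a_{hj}\partial_{\overline h}$, $E_{\overline j}=\partial_{\overline j}$. The modified Riemannian extension is $\overline{g}_{\nabla,c}(E_i,E_j)=c_{ij}$, $\overline{g}_{\nabla,c}(E_i,E_{\overline j})=\overline{g}_{\nabla,c}(E_{\overline j},E_i)=\delta_i^j$, $\overline{g}_{\nabla,c}(E_{\overline i},E_{\overline j})=0$, and $(\overline g_{\nabla,c})^{\alpha\beta}$ denotes its inverse. $\widetilde R_{\alpha\beta}=\widetilde R_{\sigma\alpha\beta}^{\ \ \ \ \sigma}$ is the Ricci tensor of $\widetilde\nabla$, where $\widetilde R(E_\alpha,E_\beta)E_\gamma=\widetilde R_{\alpha\beta\gamma}^{\ \ \ \ \varepsilon}E_\varepsilon$ and $\widetilde R(X,Y)=\widetilde\nabla_X\widetilde\nabla_Y-\widetilde\nabla_Y\widetilde\nabla_X-\widetilde\nabla_{[X,Y]}$. *)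

(* Defs.v *)
From HB Require Import structures.
From mathcomp Require Import all_boot all_order all_algebra.
From mathcomp Require Import all_classical all_reals all_analysis.
Set Implicit Arguments. Unset Strict Implicit. Unset Printing Implicit Defensive.
Import Order.TTheory GRing.Theory Num.Theory.
Import numFieldNormedType.Exports.
Local Open Scope classical_set_scope.
Local Open Scope ring_scope.

Fixpoint iterD {R : realType} {m : nat} (vs : seq 'rV[R]_m)
  (f : 'rV[R]_m -> R) : 'rV[R]_m -> R :=
  match vs with
  | [::] => f
  | v :: vs' => fun x => derive (iterD vs' f) x v
  end.

Definition smooth_on {R : realType} {m : nat} (U : set 'rV[R]_m)
  (f : 'rV[R]_m -> R) : Prop :=
  forall (vs : seq 'rV[R]_m) (x : 'rV[R]_m), U x -> differentiable (iterD vs f) x.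

Section TcotConn.
Context {R : realType} {n : nat}.
(* Gam h i j x = Gamma^h_{ij}(x), c i j x = c_{ij}(x), in a chart of M *)
Variables (Gam : 'I_n -> 'I_n -> 'I_n -> 'rV[R]_n -> R)
          (c : 'I_n -> 'I_n -> 'rV[R]_n -> R).

Definition pd (i : 'I_n) (f : 'rV[R]_n -> R) (x : 'rV[R]_n) : R :=
  derive f x (delta_mx 0 i).

Definition nablac (i j k : 'I_n) (x : 'rV[R]_n) : R :=
  pd i (c j k) x - \sum_a Gam a i j x * c a k x - \sum_a Gam a i k x * c j a x.

(* points z = (x^i, p_i) of T^*U, z : 'rV_(n+n); lshift = x-index, rshift = p-index *)
Definition xpart (z : 'rV[R]_(n + n)) : 'rV[R]_n := lsubmx z.
Definition ppart (z : 'rV[R]_(n + n)) : 'rV[R]_n := rsubmx z.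

(* adapted frame: E_j = d_j + p_a Gamma^a_{hj} d_{bar h},  E_{bar j} = d_{bar j} *)
Definition Efr (al : 'I_(n + n)) (z : 'rV[R]_(n + n)) : 'rV[R]_(n + n) :=
  \row_k match fintype.split al, fintype.split k with
         | inl j, inl k' => (k' == j)%:R
         | inl j, inr h => \sum_a ppart z 0 a * Gam a h j (xpart z)
         | inr _, inl _ => 0
         | inr j, inr h => (h == j)%:R
         end.

Definition frame_mx (z : 'rV[R]_(n + n)) : 'M[R]_(n + n) :=
  \matrix_(a, k) Efr a z 0 k.

(* frame components of a vector field V : V z = sum_a (fc V z 0 a) E_a(z) *)
Definition fc (V : 'rV[R]_(n + n) -> 'rV[R]_(n + n)) (z : 'rV[R]_(n + n))
  : 'rV[R]_(n + n) := V z *m invmx (frame_mx z).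

(* connection coefficients: nabla~_{E_al} E_be = sum_ep Cc al be ep E_ep *)
Definition Cc (al be ep : 'I_(n + n)) (z : 'rV[R]_(n + n)) : R :=
  let x := xpart z in
  match fintype.split al, fintype.split be, fintype.split ep with
  | inr _, _, _ => 0
  | inl i, inr j, inr h => - Gam j i h x
  | inl _, inr _, inl _ => 0
  | inl i, inl j, inl h => Gam h i j x
  | inl i, inl j, inr h =>
      2^-1 * (nablac i j h x + nablac j i h x - nablac h i j x)
  end.

(* the connection nabla~ on arbitrary vector fields, extended by linearity
   and the Leibniz rule from its values on the adapted frame *)
Definition nablaT (X Y : 'rV[R]_(n + n) -> 'rV[R]_(n + n)) (z : 'rV[R]_(n + n))
  : 'rV[R]_(n + n) :=
  \sum_b derive (fun z' => fc Y z' 0 b) z (X z) *: Efr b z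
  + \sum_a \sum_b \sum_e (fc X z 0 a * fc Y z 0 b * Cc a b e z) *: Efr e z.

Definition lie (X Y : 'rV[R]_(n + n) -> 'rV[R]_(n + n)) (z : 'rV[R]_(n + n))
  : 'rV[R]_(n + n) := derive Y z (X z) - derive X z (Y z).

Definition curv (X Y Z : 'rV[R]_(n + n) -> 'rV[R]_(n + n)) (z : 'rV[R]_(n + n))
  : 'rV[R]_(n + n) :=
  nablaT X (nablaT Y Z) z - nablaT Y (nablaT X Z) z - nablaT (lie X Y) Z z.

Definition curv_comp (al be ga ep : 'I_(n + n)) (z : 'rV[R]_(n + n)) : R :=
  fc (curv (Efr al) (Efr be) (Efr ga)) z 0 ep.

Definition ricT (al be : 'I_(n + n)) (z : 'rV[R]_(n + n)) : R :=
  \sum_s curv_comp s al be s z.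

(* modified Riemannian extension in the adapted frame *)
Definition gext (z : 'rV[R]_(n + n)) : 'M[R]_(n + n) :=
  \matrix_(a, b) match fintype.split a, fintype.split b with
                 | inl i, inl j => c i j (xpart z)
                 | inl i, inr j => (i == j)%:R
                 | inr i, inl j => (i == j)%:R
                 | inr _, inr _ => 0
                 end.

Definition scalT (z : 'rV[R]_(n + n)) : R :=
  \sum_a \sum_b ricT a b z * invmx (gext z) a b.

End TcotConn.

(* Main.v *)
Require Import Defs.
From HB Require Import structures.
From mathcomp Require Import all_boot all_order all_algebra.
From mathcomp Require Import all_classical all_reals all_analysis.
From mathcomp Require Import zify.
Import Order.TTheory GRing.Theory Num.Theory.
Import numFieldNormedType.Exports.
Local Open Scope classical_set_scope.
Local Open Scope ring_scope.

Lemma splitL m n (i : 'I_m) : fintype.split (lshift n i) = inl i.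
Proof. exact: (unsplitK (inl _ i)). Qed.
Lemma splitR m n (i : 'I_n) : fintype.split (rshift m i) = inr i.
Proof. exact: (unsplitK (inr _ i)). Qed.

Lemma derive_shift {R : realType} {m k : nat} (f : 'rV[R]_m -> 'rV[R]_k) a v W :
  (forall t : R, f (t *: v + a) = f a + t *: W) -> derive f a v = W.
Proof.
move=> H; rewrite /derive; apply: cvg_lim => //.
apply: cvg_near_cst; near=> h.
rewrite /= /shift H addrC addKr scalerA mulVf ?scale1r //.
near: h; exact: nbhs_dnbhs_neq.
Unshelve. all: end_near.
Qed.

Lemma derive_shiftR {R : realType} {m : nat} (f : 'rV[R]_m -> R) a v W :
  (forall t : R, f (t *: v + a) = f a + t * W) -> derive f a v = W.
Proof.
move=> H; rewrite /derive; apply: cvg_lim => //.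
apply: cvg_near_cst; near=> h.
rewrite /= /shift H addrC addKr /GRing.scale /= mulrA mulVf ?mul1r //.
near: h; exact: nbhs_dnbhs_neq.
Unshelve. all: end_near.
Qed.

Section S.
Context {R : realType} {n : nat}.
Variables (Gam : 'I_n -> 'I_n -> 'I_n -> 'rV[R]_n -> R)
          (c : 'I_n -> 'I_n -> 'rV[R]_n -> R).

Lemma xpart_shift (t : R) (v z : 'rV[R]_(n+n)) : xpart (t *: v + z) = t *: xpart v + xpart z.
Proof. by rewrite /xpart linearD linearZ. Qed.
Lemma ppart_shift (t : R) (v z : 'rV[R]_(n+n)) : ppart (t *: v + z) = t *: ppart v + ppart z.
Proof. by rewrite /ppart linearD linearZ. Qed.

Lemma frame_unit z : frame_mx Gam z \in unitmx.
Proof.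
have H : frame_mx Gam z = (frame_mx Gam z)^T^T by rewrite trmxK.
rewrite unitmxE H det_tr det_trig.
  rewrite big1 ?unitr1 // => i _; rewrite !mxE.
  by case: split_ordP => j _; rewrite eqxx.
apply/is_trig_mxP => i j lt_ij; rewrite !mxE.
case: (split_ordP j) => j' ej; case: (split_ordP i) => i' ei //=.
all: rewrite ej ei /= in lt_ij.
all: have := ltn_ord j'; have := ltn_ord i'; move=> ? ?.
all: try (have /negbTE -> : i' != j' by rewrite -val_eqE /=; lia).
all: try by [].
all: lia.
Qed.

Lemma sum_Efr (f : 'I_(n+n) -> R) z :
  \sum_e f e *: Efr Gam e z = (\row_e f e) *m frame_mx Gam z.
Proof.
rewrite mulmx_sum_row; apply: eq_bigr => e _; rewrite mxE; congr (_ *: _).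
by apply/rowP => k; rewrite !mxE.
Qed.

Lemma fc_spec (V : 'rV[R]_(n+n) -> 'rV[R]_(n+n)) z w :
  V z = w *m frame_mx Gam z -> fc Gam V z = w.
Proof. by move=> H; rewrite /fc H mulmxK // frame_unit. Qed.

Lemma fc_Efr b z e : fc Gam (Efr Gam b) z 0 e = (e == b)%:R.
Proof.
rewrite (@fc_spec _ _ (delta_mx 0 b)) ?mxE ?eqxx //.
by rewrite -rowE; apply/rowP => k; rewrite !mxE.
Qed.

Lemma fc_horiz (V : 'rV[R]_(n+n) -> 'rV[R]_(n+n)) z i :
  fc Gam V z 0 (lshift n i) = V z 0 (lshift n i).
Proof.
have E : V z = fc Gam V z *m frame_mx Gam z by rewrite /fc mulmxKV // frame_unit.
rewrite E; move: (fc Gam V z) => w.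
rewrite mxE (bigD1 (lshift n i)) //= big1 ?addr0.
  by rewrite /frame_mx /Efr !mxE splitL eqxx mulr1.
move=> a ne; rewrite /frame_mx /Efr !mxE splitL.
case: (split_ordP a) => a' ea; last by rewrite mulr0.
have /negbTE -> : i != a' by apply: contra ne => /eqP ->; rewrite ea.
by rewrite mulr0.
Qed.

Lemma fc_nablaT X Y z e :
  fc Gam (nablaT Gam c X Y) z 0 e =
  derive (fun z' => fc Gam Y z' 0 e) z (X z)
  + \sum_a \sum_b fc Gam X z 0 a * fc Gam Y z 0 b * Cc Gam c a b e z.
Proof.
set w := \row_e (derive (fun z' => fc Gam Y z' 0 e) z (X z)
  + \sum_a \sum_b fc Gam X z 0 a * fc Gam Y z 0 b * Cc Gam c a b e z).
rewrite (@fc_spec _ _ w) ?mxE //.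
rewrite -sum_Efr /nablaT.
under [RHS]eq_bigr do rewrite scalerDl.
rewrite big_split /=; congr (_ + _).
under [RHS]eq_bigr do rewrite scaler_suml.
rewrite [RHS]exchange_big /=; apply: eq_bigr => a _.
under [RHS]eq_bigr do rewrite scaler_suml.
by rewrite [RHS]exchange_big.
Qed.

Lemma fc_curv X Y Z z :
  fc Gam (curv Gam c X Y Z) z = fc Gam (nablaT Gam c X (nablaT Gam c Y Z)) z
   - fc Gam (nablaT Gam c Y (nablaT Gam c X Z)) z
   - fc Gam (nablaT Gam c (lie X Y) Z) z.
Proof. by rewrite /fc /curv !mulmxBl. Qed.

Lemma derive_cstR (k : R) (z v : 'rV[R]_(n+n)) : derive (fun _ => k) z v = 0.
Proof. by apply: derive_shiftR => t; rewrite mulr0 addr0. Qed.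

Lemma derive_xonly (F : 'rV[R]_(n+n) -> R) z v :
  (forall z1 z2, xpart z1 = xpart z2 -> F z1 = F z2) -> xpart v = 0 ->
  derive F z v = 0.
Proof.
move=> HF hv; apply: derive_shiftR => t; rewrite mulr0 addr0; apply: HF.
by rewrite xpart_shift hv scaler0 add0r.
Qed.

Lemma Cc_x a b e (z1 z2 : 'rV[R]_(n+n)) : xpart z1 = xpart z2 ->
  Cc Gam c a b e z1 = Cc Gam c a b e z2.
Proof. by move=> H; rewrite /Cc H. Qed.

Lemma Efr_R_vert k z : xpart (Efr Gam (rshift n k) z) = 0.
Proof. by apply/rowP => j; rewrite /xpart /Efr !mxE splitR splitL. Qed.

Lemma dEfrR k z v : derive (Efr Gam (rshift n k)) z v = 0.
Proof.
apply: derive_shift => t; rewrite scaler0 addr0.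
by apply/rowP => j; rewrite /Efr !mxE splitR.
Qed.

Lemma dEfr_vert s z v h : xpart v = 0 ->
  derive (Efr Gam s) z v 0 (lshift n h) = 0.
Proof.
move=> hv.
rewrite (@derive_shift _ _ _ _ _ _ (\row_k match fintype.split s, fintype.split k with
   | inl j, inr h => \sum_a ppart v 0 a * Gam a h j (xpart z) | _, _ => 0 end)).
  by rewrite mxE splitL; case: (fintype.split s).
move=> t; apply/rowP => k; rewrite /Efr !mxE xpart_shift hv scaler0 add0r.
case: (fintype.split s) => j; case: (fintype.split k) => h'; rewrite ?mulr0 ?addr0 //.
rewrite mulr_sumr -big_split /=; apply: eq_bigr => a _.
by rewrite ppart_shift !mxE mulrDl addrC mulrA.
Qed.

Lemma lie_h1 s k z h :
  fc Gam (lie (Efr Gam (rshift n k)) (Efr Gam s)) z 0 (lshift n h) = 0.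
Proof.
rewrite fc_horiz /lie dEfrR subr0; exact: dEfr_vert (Efr_R_vert k z).
Qed.

Lemma lie_h2 s k z h :
  fc Gam (lie (Efr Gam s) (Efr Gam (rshift n k))) z 0 (lshift n h) = 0.
Proof.
rewrite fc_horiz /lie dEfrR sub0r mxE (dEfr_vert s z _ h (Efr_R_vert k z)).
by rewrite oppr0.
Qed.

Lemma nabla_EE a b z e :
  fc Gam (nablaT Gam c (Efr Gam a) (Efr Gam b)) z 0 e = Cc Gam c a b e z.
Proof.
rewrite fc_nablaT.
have -> : (fun z' => fc Gam (Efr Gam b) z' 0 e) = fun _ => (e == b)%:R.
  by apply/funext => z'; rewrite fc_Efr.
rewrite derive_cstR add0r (bigD1 a) //= [X in _ + X]big1 => [|a' ne]; last first.
  by apply: big1 => b' _; rewrite fc_Efr (negbTE ne) !mul0r.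
rewrite addr0 (bigD1 b) //= [X in _ + X]big1 => [|b' ne]; last first.
  by rewrite !fc_Efr (negbTE ne) mulr0 mul0r.
by rewrite !fc_Efr !eqxx !mul1r addr0.
Qed.

Lemma fc_curv_e X Y Z z e :
  fc Gam (curv Gam c X Y Z) z 0 e = fc Gam (nablaT Gam c X (nablaT Gam c Y Z)) z 0 e
   - fc Gam (nablaT Gam c Y (nablaT Gam c X Z)) z 0 e
   - fc Gam (nablaT Gam c (lie X Y) Z) z 0 e.
Proof.
rewrite fc_curv; move: (fc Gam (nablaT Gam c X (nablaT Gam c Y Z)) z)
  (fc Gam (nablaT Gam c Y (nablaT Gam c X Z)) z) (fc Gam (nablaT Gam c (lie X Y) Z) z).
by move=> A B C; rewrite !mxE.
Qed.

Lemma curv_comp_exp s a b e z :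
  curv_comp Gam c s a b e z =
    (derive (fun z' => Cc Gam c a b e z') z (Efr Gam s z)
     + \sum_a' \sum_b' (a' == s)%:R * Cc Gam c a b b' z * Cc Gam c a' b' e z)
  - (derive (fun z' => Cc Gam c s b e z') z (Efr Gam a z)
     + \sum_a' \sum_b' (a' == a)%:R * Cc Gam c s b b' z * Cc Gam c a' b' e z)
  - \sum_a' \sum_b' fc Gam (lie (Efr Gam s) (Efr Gam a)) z 0 a' * (b' == b)%:R
       * Cc Gam c a' b' e z.
Proof.
rewrite /curv_comp fc_curv_e !fc_nablaT.
have -> : (fun z' => fc Gam (nablaT Gam c (Efr Gam a) (Efr Gam b)) z' 0 e)
   = (fun z' => Cc Gam c a b e z') by apply/funext => z'; rewrite nabla_EE.
have -> : (fun z' => fc Gam (nablaT Gam c (Efr Gam s) (Efr Gam b)) z' 0 e)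
   = (fun z' => Cc Gam c s b e z') by apply/funext => z'; rewrite nabla_EE.
have -> : (fun z' => fc Gam (Efr Gam b) z' 0 e) = fun _ => (e == b)%:R.
  by apply/funext => z'; rewrite fc_Efr.
rewrite derive_cstR add0r.
congr (_ + _ - (_ + _) - _).
- by apply: eq_bigr => a' _; apply: eq_bigr => b' _; rewrite nabla_EE fc_Efr.
- by apply: eq_bigr => a' _; apply: eq_bigr => b' _; rewrite nabla_EE fc_Efr.
- by apply: eq_bigr => a' _; apply: eq_bigr => b' _; rewrite fc_Efr.
Qed.

Lemma ric_R a j z : ricT Gam c a (rshift n j) z = 0.
Proof.
rewrite /ricT; apply: big1 => s _; rewrite curv_comp_exp.
case: (split_ordP s) => k ->; case: (split_ordP a) => i ->.
all: rewrite /Cc ?splitL ?splitR /=.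
all: rewrite ?derive_cstR.
all: try (rewrite derive_xonly; [|by move=> z1 z2 ->|exact: Efr_R_vert]).
all: rewrite !big1 ?add0r ?subr0 ?oppr0 ?subrr; try done.
all: (move=> a' _; apply: big1 => b' _; case: (split_ordP a') => a1 ea; rewrite ?ea;
  case: (split_ordP b') => b1 eb; rewrite ?eb;
  rewrite ?eq_lrshift ?eq_rlshift; cbv iota beta).
all: rewrite ?mulr0n ?(mulr0, mul0r); try done.
all: by rewrite lie_h1 !mul0r.
Qed.

Lemma ric_RL i0 j z : ricT Gam c (rshift n i0) (lshift n j) z = 0.
Proof.
rewrite /ricT; apply: big1 => s _; rewrite curv_comp_exp.
case: (split_ordP s) => k ->.
all: rewrite /Cc ?splitL ?splitR /=.
all: rewrite ?derive_cstR.
all: try (rewrite derive_xonly; [|by move=> z1 z2 ->|exact: Efr_R_vert]).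
all: rewrite !big1 ?add0r ?subr0 ?oppr0 ?subrr; try done.
all: (move=> a' _; apply: big1 => b' _; case: (split_ordP a') => a1 ea; rewrite ?ea;
  case: (split_ordP b') => b1 eb; rewrite ?eb;
  rewrite ?eq_lrshift ?eq_rlshift; cbv iota beta).
all: rewrite ?mulr0n ?(mulr0, mul0r); try done.
all: by rewrite lie_h2 !mul0r.
Qed.

Lemma gext_block z : gext c z =
  block_mx (\matrix_(i, j) c i j (xpart z)) 1%:M 1%:M 0.
Proof.
apply/matrixP => a b; rewrite /gext mxE.
case: (split_ordP a) => i ->; case: (split_ordP b) => j ->;
rewrite ?splitL ?splitR ?(block_mxEul, block_mxEur, block_mxEdl, block_mxEdr) !mxE //.
Qed.

Lemma ginv_LL z i j : invmx (gext c z) (lshift n i) (lshift n j) = 0.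
Proof.
set C := \matrix_(i, j) c i j (xpart z).
have H : gext c z *m block_mx 0 1%:M 1%:M (- C) = 1%:M.
  rewrite gext_block mulmx_block !mulmx0 !mul0mx !mulmx1 !mul1mx add0r addr0.
  by rewrite subrr [RHS]scalar_mx_block addr0.
have U := proj1 (mulmx1_unit H).
have -> : invmx (gext c z) = block_mx 0 1%:M 1%:M (- C).
  by rewrite -[LHS]mulmx1 -H mulmxA mulVmx // mul1mx.
by rewrite block_mxEul mxE.
Qed.
End S.

Theorem theorem4 (R : realType) (n : nat) (U : set 'rV[R]_n)
  (Gam : 'I_n -> 'I_n -> 'I_n -> 'rV[R]_n -> R)
  (c : 'I_n -> 'I_n -> 'rV[R]_n -> R) :
  open U ->
  (forall h i j, smooth_on U (Gam h i j)) ->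
  (forall i j, smooth_on U (c i j)) ->
  (forall h i j x, U x -> Gam h i j x = Gam h j i x) ->
  (forall i j x, U x -> c i j x = c j i x) ->
  forall z : 'rV[R]_(n + n), U (xpart z) -> scalT Gam c z = 0.
Proof.
move=> _ _ _ _ _ z _; rewrite /scalT; apply: big1 => a _; apply: big1 => b _.
case: (split_ordP b) => j ->; last by rewrite ric_R mul0r.
case: (split_ordP a) => i ->; first by rewrite ginv_LL mulr0.
by rewrite ric_RL mul0r.
Qed.
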